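(* Let $X^+$ be a one-sided subshift whose natural extension $\tilde X$ is infinite and minimal. Then the eventually Markov part $\tilde X_M$ of $\tilde X$ is empty.
   Context: Let $\mathcal A$ be a finite alphabet and $\sigma$ the shift, $(\sigma x)_i=x_{i+1}$. A one-sided subshift is a nonempty closed $\sigma$-invariant $X^+\subseteq\mathcal A^{\mathbb N}$; its natural extension is $\tilde X=\{x\in\mathcal A^{\mathbb Z}: x_px_{p+1}\dots\in X^+ \text{ for all } p\in\mathbb Z\}$ with the shift. For a block $a_{-n}\dots a_0$ occurring in $\tilde X$, $\mathrm{fol}(a_{-n}\dots a_0)=\{b_0b_1\dots\in X^+:\exists b\in\tilde X \text{ with } b_{-n}\dots b_0=a_{-n}\dots a_0\}$. A point $a\in\tilde X$ is eventually Markov at time $p\in\mathbb Z$ if there is $N$ such that $\mathrm{fol}(a_{p-n}\dots a_p)=\mathrm{fol}(a_{p-N}\dots a_p)$ for all $n\ge N$. The eventually Markov part $\tilde X_M$ is the set of $a\in\tilde X$ that are eventually Markov at every time $p\in\mathbb Z$. A system is minimal if every orbit is dense. *)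

(* Defs.v *)
From mathcomp Require Import ssreflect ssrbool fintype.
From Stdlib Require Import ZArith List.
Open Scope Z_scope.

Section Subshift.
Set Implicit Arguments.
Variable A : finType.

Definition seqN := nat -> A.
Definition seqZ := Z -> A.

Definition shiftN (x : seqN) : seqN := fun i => x (S i).

(* closedness in the product (Cantor) topology of A^N, A finite discrete:
   a sequence all of whose finite prefixes are prefixes of points of X is in X *)
Definition closedN (X : seqN -> Prop) : Prop :=
  forall y : seqN,
    (forall n : nat, exists z, X z /\ forall i : nat, (i < n)%nat -> z i = y i) ->
    X y.

Definition one_sided_subshift (X : seqN -> Prop) : Prop :=
  (exists x, X x) /\ closedN X /\ (forall x, X x -> X (shiftN x)).

Definition tail_from (x : seqZ) (p : Z) : seqN := fun i => x (p + Z.of_nat i).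

Definition nat_ext (X : seqN -> Prop) (x : seqZ) : Prop :=
  forall p : Z, X (tail_from x p).

Definition shiftZ_iter (k : Z) (x : seqZ) : seqZ := fun i => x (i + k).

(* the system (nat_ext X, sigma) is minimal: every (two-sided) orbit is dense,
   density in the product topology of A^Z *)
Definition minimal_ext (X : seqN -> Prop) : Prop :=
  forall x y, nat_ext X x -> nat_ext X y ->
    forall m : nat, exists k : Z,
      forall i : Z, - Z.of_nat m <= i <= Z.of_nat m -> shiftZ_iter k x i = y i.

Definition infinite_ext (X : seqN -> Prop) : Prop :=
  ~ exists l : list seqZ, forall x, nat_ext X x -> In x l.

(* fol(a_{p-n} ... a_p) as a predicate on A^N *)
Definition fol (X : seqN -> Prop) (a : seqZ) (p : Z) (n : nat) (c : seqN) : Prop :=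
  X c /\
  exists b : seqZ, nat_ext X b /\
    (forall k : nat, (k <= n)%nat -> b (- Z.of_nat k) = a (p - Z.of_nat k)) /\
    (forall i : nat, b (Z.of_nat i) = c i).

Definition eventually_Markov_at (X : seqN -> Prop) (a : seqZ) (p : Z) : Prop :=
  exists N : nat, forall n : nat, (N <= n)%nat ->
    forall c : seqN, fol X a p n c <-> fol X a p N c.

Definition eventually_Markov_part (X : seqN -> Prop) (a : seqZ) : Prop :=
  nat_ext X a /\ forall p : Z, eventually_Markov_at X a p.

End Subshift.

(* Main.v *)
Require Import Defs.
From mathcomp Require Import ssreflect ssrbool fintype.
From Stdlib Require Import ZArith List.
From mathcomp Require Import eqtype seq.
From Stdlib Require Import Lia Classical FunctionalExtensionality IndefiniteDescription.
Local Open Scope Z_scope.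

Lemma In_enum (T : finType) (t : T) : In t (enum {: T}).
Proof.
  have : t \in enum {: T} by rewrite mem_enum.
  elim: (enum {: T}) => [|x s IH] //=.
  rewrite seq.in_cons => /orP [/eqP ->|H]; [left|right]; auto.
Qed.

Lemma pigeon (T : Type) (l : list T) (P : nat -> T -> Prop) :
  (forall M, exists n, (M <= n)%nat /\ exists t, In t l /\ P n t) ->
  exists t, In t l /\ forall M, exists n, (M <= n)%nat /\ P n t.
Proof.
  intros H. apply NNPP; intros Hn.
  assert (Hb : forall l', incl l' l -> exists M, forall t, In t l' -> forall n, (M <= n)%nat -> ~ P n t).
  { induction l' as [|t l' IH]; intros Hi.
    - exists 0%nat. intros t [].
    - destruct IH as [M1 HM1]. { intros x Hx; apply Hi; right; auto. }
      assert (Ht : exists M, forall n, (M <= n)%nat -> ~ P n t).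
      { apply NNPP; intros Hc. apply Hn. exists t. split. apply Hi; left; auto.
        intros M. apply NNPP; intros Hc2. apply Hc. exists M. intros n Hmn Pn. apply Hc2. exists n; auto. }
      destruct Ht as [M2 HM2]. exists (Nat.max M1 M2). intros x [<-|Hx] n Hn'.
      + apply HM2; lia.
      + apply HM1; auto; lia. }
  destruct (Hb l (incl_refl l)) as [M HM].
  destruct (H M) as [n [Hn' [t [Ht Pt]]]]. exact (HM t Ht n Hn' Pt).
Qed.

Section Proof.
Variable A : finType.
Variable X : seqN A -> Prop.
Hypothesis HX : closedN X.

Lemma X_ext (z y : seqN A) : X z -> (forall i, z i = y i) -> X y.
Proof. intros Hz H. apply HX. intros n. exists z. split; auto. Qed.

Lemma nat_ext_ext (z y : seqZ A) : nat_ext X z -> (forall i, z i = y i) -> nat_ext X y.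
Proof. intros Hz H p. eapply X_ext; [exact (Hz p)|]. intros i. unfold tail_from. apply H. Qed.

Lemma nat_ext_shift (z : seqZ A) k : nat_ext X z -> nat_ext X (shiftZ_iter k z).
Proof. intros Hz p. eapply X_ext; [exact (Hz (p + k))|]. intros i. unfold tail_from, shiftZ_iter. f_equal. lia. Qed.

Definition agree (m : nat) (u v : seqZ A) := forall i, Z.abs i < Z.of_nat m -> u i = v i.

Section Compact.
Variable y : nat -> seqZ A.
Definition good m u := forall M : nat, exists n, (M <= n)%nat /\ agree m u (y n).

Lemma good0 u : good 0 u.
Proof. intros M. exists M. split; auto. intros i Hi. lia. Qed.

Lemma good_step m u : good m u -> exists v, agree m u v /\ good (S m) v.
Proof.
  intros Hg.
  set (P := fun n (t : (A * A)%type) => agree m u (y n) /\ t = (y n (- Z.of_nat m), y n (Z.of_nat m))).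
  destruct (@pigeon _ (enum {: A * A}) P) as [[al be] [_ Hp]].
  { intros M. destruct (Hg M) as [n [Hn Ha]]. exists n; split; auto.
    exists (y n (- Z.of_nat m), y n (Z.of_nat m)). split. apply In_enum. split; auto. }
  exists (fun i => if Z.eqb i (- Z.of_nat m) then al else if Z.eqb i (Z.of_nat m) then be else u i).
  split.
  - intros i Hi. destruct (Z.eqb_spec i (- Z.of_nat m)); [lia|].
    destruct (Z.eqb_spec i (Z.of_nat m)); [lia|]. reflexivity.
  - intros M. destruct (Hp M) as [n [Hn [Ha Hab]]]. exists n. split; auto.
    injection Hab as -> ->.
    intros i Hi. destruct (Z.eqb_spec i (- Z.of_nat m)); [subst; reflexivity|].
    destruct (Z.eqb_spec i (Z.of_nat m)); [subst; reflexivity|].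
    apply Ha. lia.
Qed.

Definition nxt (m : nat) (u : {u | good m u}) : {v | good (S m) v}.
Proof.
  destruct (constructive_indefinite_description _ (@good_step m (proj1_sig u) (proj2_sig u))) as [v [_ Hv]].
  exact (exist _ v Hv).
Defined.

Lemma nxt_agree m u : agree m (proj1_sig u) (proj1_sig (nxt m u)).
Proof.
  unfold nxt. destruct (constructive_indefinite_description _ _) as [v [Ha Hv]]. exact Ha.
Qed.

Fixpoint h (m : nat) : {u | good m u} :=
  match m with 0%nat => exist _ (y 0%nat) (good0 _) | S m' => nxt m' (h m') end.

Lemma h_mono m k : agree m (proj1_sig (h m)) (proj1_sig (h (m + k))).
Proof.
  induction k as [|k IH].
  - rewrite Nat.add_0_r. intros i _. reflexivity.
  - rewrite Nat.add_succ_r. intros i Hi. rewrite (IH i Hi). simpl.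
    apply nxt_agree. lia.
Qed.

Definition zlim : seqZ A := fun i => proj1_sig (h (S (Z.abs_nat i))) i.

Lemma zlim_cluster m M : exists n, (M <= n)%nat /\ agree m zlim (y n).
Proof.
  destruct (proj2_sig (h m) M) as [n [Hn Ha]]. exists n. split; auto.
  intros i Hi. unfold zlim. set j := S (Z.abs_nat i).
  assert (E : (j + (m - j))%nat = m) by (unfold j; lia).
  have := h_mono j (m - j). rewrite E => Hm.
  have Hij : Z.abs i < Z.of_nat j by (unfold j; lia).
  rewrite (Hm i Hij). apply Ha; auto.
Qed.

End Compact.

Lemma compact (y : nat -> seqZ A) : (forall n, nat_ext X (y n)) ->
  exists z, nat_ext X z /\ forall m M, exists n, (M <= n)%nat /\ agree m z (y n).
Proof.
  intros Hy. exists (zlim y). split; [|apply zlim_cluster].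
  intros p. apply HX. intros L.
  destruct (zlim_cluster y (Z.abs_nat p + L + 1) 0) as [n [_ Ha]].
  exists (tail_from (y n) p). split; [apply Hy|].
  intros i Hi. unfold tail_from. symmetry. apply Ha. lia.
Qed.

Hypothesis Hmin : minimal_ext X.

Section Point.
Variable a : seqZ A.
Hypothesis Ha : nat_ext X a.
Variable N : nat.
Hypothesis HM : forall n, (N <= n)%nat -> forall c, fol X a 0 n c <-> fol X a 0 N c.

Definition glue (c : seqN A) : seqZ A := fun i => if i <? 0 then a i else c (Z.to_nat i).

Lemma glue_ok c : fol X a 0 N c -> nat_ext X (glue c).
Proof.
  intros Hc p.
  destruct (proj2 (HM (Nat.max N (Z.to_nat (-p))) (Nat.le_max_l _ _) c) Hc)
    as [Xc [b [Hb [Hba Hbc]]]].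
  eapply X_ext; [exact (Hb p)|]. intro i. unfold tail_from, glue.
  destruct (Z.ltb_spec (p + Z.of_nat i) 0).
  - set k := Z.to_nat (-(p + Z.of_nat i)).
    replace (p + Z.of_nat i) with (- Z.of_nat k) by (unfold k; lia).
    rewrite Hba. all: try (unfold k; lia). f_equal; lia.
  - rewrite -Hbc. f_equal. lia.
Qed.

Lemma left_occ : exists q, 0 < q /\ forall t, (t <= N)%nat -> a (- q - Z.of_nat t) = a (- Z.of_nat t).
Proof.
  set y := fun n : nat => shiftZ_iter (- Z.of_nat n) a.
  destruct (@compact y) as [z [Hz Hcl]].
  { intros n. apply nat_ext_shift. exact Ha. }
  destruct (Hmin z a Hz Ha N) as [k Hk].
  destruct (Hcl (Z.abs_nat k + N + 1)%nat (Z.abs_nat k + N + 1)%nat) as [n [Hn Hag]].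
  exists (Z.of_nat n - k). split. lia. intros t Ht.
  have E1 := Hk (- Z.of_nat t) ltac:(lia). unfold shiftZ_iter in E1.
  have E2 := Hag (- Z.of_nat t + k) ltac:(lia). unfold y, shiftZ_iter in E2.
  rewrite -E1 E2. f_equal. lia.
Qed.

Variable q : Z.
Hypothesis Hq : 0 < q.
Hypothesis Hocc : forall t, (t <= N)%nat -> a (- q - Z.of_nat t) = a (- Z.of_nat t).

Definition zk (k : nat) : seqZ A := fun i =>
  if i <? 0 then a i else if i <? Z.of_nat k * q then a (- q + i mod q) else a (i - Z.of_nat k * q).

Lemma pump k : nat_ext X (zk k).
Proof.
  induction k as [|k IH].
  - eapply nat_ext_ext; [exact Ha|]. intro i. unfold zk.
    destruct (Z.ltb_spec i 0); auto.
    destruct (Z.ltb_spec i (Z.of_nat 0 * q)); [lia|]. f_equal; lia.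
  - set c := tail_from (zk k) (- q).
    have Hc : fol X a 0 N c.
    { split. apply IH. exists (shiftZ_iter (- q) (zk k)). split. apply nat_ext_shift, IH.
      split.
      - intros t Ht. unfold shiftZ_iter, zk.
        destruct (Z.ltb_spec (- Z.of_nat t + - q) 0); [|lia].
        replace (- Z.of_nat t + - q) with (- q - Z.of_nat t) by lia.
        rewrite (Hocc t Ht). f_equal; lia.
      - intros i. unfold shiftZ_iter, c, tail_from. f_equal. lia. }
    eapply nat_ext_ext; [exact (glue_ok c Hc)|]. intro i. unfold glue, c, tail_from, zk.
    destruct (Z.ltb_spec i 0); auto.
    rewrite Z2Nat.id; last lia.
    have E : Z.of_nat (S k) * q = Z.of_nat k * q + q by (rewrite Nat2Z.inj_succ; ring).
    have K0 : 0 <= Z.of_nat k * q by nia.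
    rewrite E.
    destruct (Z.ltb_spec (- q + i) 0).
    + destruct (Z.ltb_spec i (Z.of_nat k * q + q)); [|lia].
      rewrite (Z.mod_small i q); first reflexivity. lia.
    + destruct (Z.ltb_spec (- q + i) (Z.of_nat k * q)).
      * destruct (Z.ltb_spec i (Z.of_nat k * q + q)); [|lia].
        f_equal. f_equal.
        replace (- q + i) with (i + (-1) * q) by ring.
        apply Z.mod_add. lia.
      * destruct (Z.ltb_spec i (Z.of_nat k * q + q)); [lia|].
        f_equal. lia.
Qed.

Definition R : seqZ A := fun i => a (- q + i mod q).

Lemma R_ext : nat_ext X R.
Proof.
  intros p. apply HX. intros L.
  set p' := p mod q.
  have Hp' : 0 <= p' < q by (apply Z.mod_pos_bound; lia).
  set k := (Z.to_nat (p' + Z.of_nat L) + 1)%nat.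
  have Hk : p' + Z.of_nat L < Z.of_nat k * q by (unfold k; nia).
  exists (tail_from (zk k) p'). split; [apply pump|].
  intros i Hi. unfold tail_from, zk, R.
  destruct (Z.ltb_spec (p' + Z.of_nat i) 0); [lia|].
  destruct (Z.ltb_spec (p' + Z.of_nat i) (Z.of_nat k * q)); [|lia].
  f_equal. f_equal. unfold p'. apply Z.add_mod_idemp_l. lia.
Qed.

Lemma finite_ext : exists l : list (seqZ A), forall x, nat_ext X x -> In x l.
Proof.
  exists (map (fun j => shiftZ_iter (Z.of_nat j) R) (List.seq 0 (Z.to_nat q))).
  intros x Hx.
  set P := fun (m j : nat) => forall i, - Z.of_nat m <= i <= Z.of_nat m -> shiftZ_iter (Z.of_nat j) R i = x i.
  destruct (@pigeon _ (List.seq 0 (Z.to_nat q)) P) as [j [Hj Hp]].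
  { intros M. exists M. split; auto.
    destruct (Hmin R x R_ext Hx M) as [k Hk].
    exists (Z.to_nat (k mod q)). split.
    - apply in_seq. have := Z.mod_pos_bound k q Hq. lia.
    - intros i Hi. rewrite -(Hk i Hi). unfold shiftZ_iter, R. f_equal. f_equal.
      rewrite Z2Nat.id; last (have := Z.mod_pos_bound k q Hq; lia).
      apply Z.add_mod_idemp_r. lia. }
  apply in_map_iff. exists j. split; auto.
  apply functional_extensionality. intro i.
  destruct (Hp (Z.abs_nat i)) as [n [Hn Pn]]. apply Pn. lia.
Qed.

End Point.

End Proof.

Theorem proposition5p13 (A : finType) (X : seqN A -> Prop) :
  one_sided_subshift X ->
  infinite_ext X ->
  minimal_ext X ->
  forall a : seqZ A, ~ eventually_Markov_part X a.
Proof.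
  intros [_ [HX _]] Hinf Hmin a [Ha HMa].
  destruct (HMa 0) as [N HN].
  destruct (@left_occ A X HX Hmin a Ha N) as [q [Hq Hocc]].
  apply Hinf. exact (@finite_ext A X HX Hmin a Ha N HN q Hq Hocc).
Qed.
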